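(* Let $T_1=(V_1,E_1)$ and $T_2=(V_2,E_2)$ be trees with $|V_1|=|V_2|=n$. Then $S_{T_1}\cap S_{T_2}\ne\emptyset$ if and only if $T_1$ and $T_2$ are isomorphic.
   Context: $\mathbb{C}[S_n]$ is the group algebra of the symmetric group $S_n$. A labeling of a graph $G=(V,E)$ with $|V|=n$ is a bijection $\mathcal{L}:V\to\{1,\dots,n\}$; under it an edge $\{u,v\}$ corresponds to the transposition $(\mathcal{L}(u)\,\mathcal{L}(v))\in S_n$. For a labeling $\mathcal{L}$ and an ordering $\pi=(e_1,\dots,e_m)$ of $E$, $\mathcal{K}_{\mathcal{L},\pi}(G)=n!\,(1-t_1)(1-t_2)\cdots(1-t_m)\in\mathbb{C}[S_n]$, where $t_r$ is the transposition corresponding to $e_r$ under $\mathcal{L}$ and the product is in the order of $\pi$. Define $S_G=\{\mathcal{K}_{\mathcal{L},\pi}(G):\mathcal{L}\text{ a labeling of }V,\ \pi\text{ an ordering of }E\}$. *)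

(* Defs.v *)
From HB Require Import structures.
From mathcomp Require Import all_boot all_order all_algebra all_fingroup all_field.
Set Implicit Arguments. Unset Strict Implicit. Unset Printing Implicit Defensive.
Import GRing.Theory Num.Theory.
Local Open Scope ring_scope.

Definition simple_graph (V : finType) (e : rel V) : Prop :=
  symmetric e /\ irreflexive e.

Definition has_cycle (V : finType) (e : rel V) : Prop :=
  exists (x : V) (p : seq V),
    [/\ (2 <= size p)%N, uniq (x :: p), path e x p & e (last x p) x].

Definition is_tree (V : finType) (e : rel V) : Prop :=
  [/\ simple_graph e, (0 < #|V|)%N, (forall x y : V, connect e x y) & ~ has_cycle e].

Definition graph_iso (V1 V2 : finType) (e1 : rel V1) (e2 : rel V2) : Prop :=
  exists f : V1 -> V2, bijective f /\ forall x y : V1, e2 (f x) (f y) = e1 x y.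

(* Elements of C[S_n] are represented by their coefficient functions S_n -> C. *)
Definition GA (n : nat) := {ffun 'S_n -> algC}.

Definition ga_delta n (s : 'S_n) : GA n := [ffun x => (x == s)%:R].
Definition ga_one n : GA n := ga_delta 1%g.
(* convolution product: (f g)(s) = sum_{a b = s} f(a) g(b) *)
Definition ga_mul n (f g : GA n) : GA n :=
  [ffun s => \sum_(a : 'S_n) f a * g (a^-1 * s)%g].
Definition ga_scale n (c : algC) (f : GA n) : GA n := [ffun s => c * f s].
Definition ga_one_minus n (t : 'S_n) : GA n :=
  [ffun x => (x == 1%g)%:R - (x == t)%:R].

Definition edge_transp (V : finType) n (L : V -> 'I_n) (uv : V * V) : 'S_n :=
  tperm (L uv.1) (L uv.2).

Definition K_elem (V : finType) n (L : V -> 'I_n) (pi : seq (V * V)) : GA n :=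
  ga_scale (n`!)%:R
    (foldr (fun uv acc => ga_mul (ga_one_minus (edge_transp L uv)) acc) (ga_one n) pi).

Definition edge_set (V : finType) (e : rel V) : {set {set V}} :=
  [set [set x.1; x.2] | x in [pred x : V * V | e x.1 x.2]].

(* pi is an ordering of E: a list of oriented representatives (u,v) of edges,
   whose underlying unordered edges list every edge of E exactly once. *)
Definition edge_ordering (V : finType) (e : rel V) (pi : seq (V * V)) : Prop :=
  all (fun uv => e uv.1 uv.2) pi /\
  perm_eq [seq [set uv.1; uv.2] | uv <- pi] (enum (edge_set e)).

Definition in_S_G (V : finType) (e : rel V) n (x : GA n) : Prop :=
  exists (L : V -> 'I_n) (pi : seq (V * V)),
    [/\ bijective L, edge_ordering e pi & x = K_elem L pi].

(* Main.v *)
Require Import Defs.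
From HB Require Import structures.
From mathcomp Require Import all_boot all_order all_algebra all_fingroup all_field.
Set Implicit Arguments. Unset Strict Implicit. Unset Printing Implicit Defensive.
Import GRing.Theory Num.Theory.
Local Open Scope ring_scope.

Lemma ga_mulE n (t : 'S_n) (g : GA n) s :
  ga_mul (ga_one_minus t) g s = g s - g (t^-1 * s)%g.
Proof.
rewrite /ga_mul ffunE.
under eq_bigr => a _ do rewrite ffunE mulrBl.
rewrite sumrB.
have H j (G : 'S_n -> algC) : \sum_(a : 'S_n) (a == j)%:R * G a = G j.
  rewrite (bigD1 j) //= eqxx mul1r big1 ?addr0 // => a /negbTE ->.
  by rewrite mul0r.
by rewrite (H 1%g (fun a => g (a^-1 * s)%g)) (H t (fun a => g (a^-1 * s)%g)) invg1 mul1g.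
Qed.

Definition Fpi (V : finType) n (L : V -> 'I_n) (pi : seq (V * V)) : GA n :=
  foldr (fun uv acc => ga_mul (ga_one_minus (edge_transp L uv)) acc) (ga_one n) pi.

Lemma K_elemE (V : finType) n (L : V -> 'I_n) pi s :
  K_elem L pi s = (n`!)%:R * Fpi L pi s.
Proof. by rewrite /K_elem /ga_scale ffunE. Qed.

Definition gV (V : finType) (pi : seq (V * V)) : rel V :=
  fun x y => has (fun f => ((f.1 == x) && (f.2 == y)) || ((f.1 == y) && (f.2 == x))) pi.

Lemma gV_sym (V : finType) (pi : seq (V * V)) : symmetric (gV pi).
Proof. by move=> x y; rewrite /gV; apply: eq_has => f; rewrite orbC. Qed.

Fixpoint forestb (V : finType) (pi : seq (V * V)) : bool :=
  if pi is f :: pi' then ~~ connect (gV pi') f.1 f.2 && forestb pi' else true.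

Lemma tperm_eq1 n (a b : 'I_n) : (tperm a b == 1%g) = (a == b).
Proof.
apply/eqP/eqP => [H|->]; last exact: tperm1.
by move/permP: H => /(_ a); rewrite tpermL perm1.
Qed.

Lemma tperm_inj_pair n (a b c d : 'I_n) : a != b -> tperm a b = tperm c d ->
  (a == c) && (b == d) || (a == d) && (b == c).
Proof.
move=> ab H.
have Ha : tperm c d a = b by rewrite -H tpermL.
move: Ha; case: tpermP => [-> <-|-> <-|_ _ E]; rewrite ?eqxx ?orbT //.
by rewrite E eqxx in ab.
Qed.

Lemma set2_eq (V : finType) (a b c d : V) : [set a; b] = [set c; d] ->
  (a == c) && (b == d) || (a == d) && (b == c).
Proof.
move=> H.
have ha : a \in [set c; d] by rewrite -H set21.
have hb : b \in [set c; d] by rewrite -H set22.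
have hc : c \in [set a; b] by rewrite H set21.
have hd : d \in [set a; b] by rewrite H set22.
move: ha hb hc hd; rewrite !inE.
by do 4 (case/orP => /eqP ?; subst); rewrite ?eqxx ?orbT.
Qed.

Lemma inv_main (V : finType) n (L : V -> 'I_n) (pi : seq (V * V)) :
  bijective L -> all (fun f => f.1 != f.2) pi -> forestb pi ->
  (forall s, Fpi L pi s != 0 -> forall x y, s (L x) = L y -> connect (gV pi) x y) /\
  (forall a b, Fpi L pi (tperm a b) =
     (a == b)%:R - (count (fun f => edge_transp L f == tperm a b) pi)%:R).
Proof.
move=> bijL; have injL := bij_inj bijL; case: bijL => M LM ML.
elim: pi => [|e pi IH] /=.
  split.
    move=> s; rewrite /Fpi /= ffunE; have [-> _|_] := eqVneq s 1%g; last by rewrite eqxx.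
    move=> x y; rewrite perm1 => /injL ->; exact: connect0.
  by move=> a b; rewrite /Fpi /= ffunE subr0 tperm_eq1.
move=> /andP [ne ane] /andP [nc fb].
have [IH1 IH2] := IH ane fb.
set t := edge_transp L e.
have Fc s : Fpi L (e :: pi) s = Fpi L pi s - Fpi L pi (t * s)%g.
  by rewrite /Fpi /= ga_mulE /t /edge_transp tpermV.
have tt : (t * t = 1)%g by apply/permP => z; rewrite permM /t /edge_transp tpermK perm1.
have t1 : t != 1%g by rewrite /t /edge_transp tperm_eq1 (inj_eq injL).
have F1 : Fpi L pi 1%g = 1.
  have := IH2 (L e.1) (L e.1); rewrite tperm1 eqxx.
  have -> : count (fun f => edge_transp L f == 1%g) pi = 0%N.
    apply/eqP; rewrite -leqn0 leqNgt -has_count; apply/hasPn => f fin /=.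
    rewrite /edge_transp tperm_eq1 (inj_eq injL); exact: (allP ane).
  by rewrite subr0.
have lift u v : connect (gV pi) u v -> connect (gV (e :: pi)) u v.
  by apply: connect_sub => u' v' H; apply: connect1; rewrite /gV /=; rewrite /gV in H; rewrite H orbT.
have key a b : Fpi L pi (t * tperm a b)%g != 0 -> tperm a b = t.
  move=> /IH1 H.
  have H1 : (L e.2 == a) || (L e.2 == b).
    move: (H e.1 (M (tperm a b (L e.2)))); rewrite permM /t /edge_transp tpermL ML.
    move=> /(_ erefl).
    case: tpermP => [->|->|_ _]; rewrite ?eqxx ?orbT // LM => C.
    by rewrite C in nc.
  have H2 : (L e.1 == a) || (L e.1 == b).
    move: (H e.2 (M (tperm a b (L e.1)))); rewrite permM /t /edge_transp tpermR ML.
    move=> /(_ erefl).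
    case: tpermP => [->|->|_ _]; rewrite ?eqxx ?orbT // LM => C.
    by rewrite (sym_connect_sym (@gV_sym _ pi)) C in nc.
  have ne' : L e.1 != L e.2 by rewrite (inj_eq injL).
  rewrite /t /edge_transp.
  case/orP: H1 => /eqP ?; subst; case/orP: H2 => /eqP E.
  - by rewrite E eqxx in ne'.
  - by subst; rewrite tpermC.
  - by subst.
  - by rewrite E eqxx in ne'.
split.
  move=> s; rewrite Fc => Hs x y Hxy.
  have [Hs1|Hs1] := eqVneq (Fpi L pi s) 0; last exact: lift (IH1 s Hs1 x y Hxy).
  have Ht : Fpi L pi (t * s)%g != 0.
    by apply/eqP => E; move: Hs; rewrite Hs1 E subrr eqxx.
  pose x' := if x == e.1 then e.2 else if x == e.2 then e.1 else x.
  have Tx : t (L x) = L x'.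
    rewrite /t /edge_transp /x'; case: (eqVneq x e.1) => [->|n1]; first by rewrite tpermL.
    case: (eqVneq x e.2) => [->|n2]; first by rewrite tpermR.
    by rewrite tpermD // (inj_eq injL) eq_sym.
  have Cxx' : connect (gV (e :: pi)) x x'.
    rewrite /x'; case: (eqVneq x e.1) => [->|_].
      by apply: connect1; rewrite /gV /= !eqxx.
    case: (eqVneq x e.2) => [->|_]; last exact: connect0.
    by apply: connect1; rewrite /gV /= !eqxx orbT.
  have : connect (gV pi) x' y.
    apply: (IH1 _ Ht); rewrite permM -Tx /t /edge_transp tpermK; exact: Hxy.
  by move/lift; apply: connect_trans.
move=> a b; rewrite Fc IH2 /=.
have [Hk|Hk] := eqVneq (Fpi L pi (t * tperm a b)%g) 0.
  rewrite Hk subr0.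
  have -> : (t == tperm a b) = false.
    apply/negbTE/eqP => E; move: Hk; rewrite -E tt F1; exact/eqP/oner_neq0.
  by rewrite add0n.
have E := key a b Hk.
have ab : a != b by rewrite -tperm_eq1 E.
rewrite E tt F1 eqxx (negbTE ab) /= natrD.
by rewrite !sub0r opprD addrC.
Qed.

Lemma forest_of (V : finType) (e : rel V) pi :
  symmetric e -> irreflexive e -> ~ has_cycle e ->
  all (fun f => e f.1 f.2) pi -> uniq [seq [set uv.1; uv.2] | uv <- pi] -> forestb pi.
Proof.
move=> sym irr nocyc.
elim: pi => //= f pi IH /andP [ef allp] /andP [nin uq]; rewrite IH // andbT.
apply/negP => /connectP [p pth lst].
have sub : subrel (gV pi) e.
  move=> u v /hasP [g gin /orP [] /andP [/eqP <- /eqP <-]].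
    exact: (allP allp g gin).
  by rewrite sym; exact: (allP allp g gin).
move: lst; case/shortenP: pth => p' pth' uq' _ lst.
have pe : path e f.1 p' := sub_path sub pth'.
case: p' pth' uq' pe lst => [|y [|z p'']] /= pth' uq' pe lst.
- by move: ef; rewrite lst irr.
- move: pth' => /andP [/hasP [g gin Hg] _].
  apply: (negP nin); apply/mapP; exists g => //.
  rewrite -lst in Hg.
  case/orP: Hg => /andP [/eqP -> /eqP ->] //.
  by rewrite setUC.
- apply: nocyc; exists f.1, [:: y, z & p'']; split => //.
  by rewrite /= -lst sym.
Qed.

Lemma edge_char (V : finType) n (e : rel V) (L : V -> 'I_n) pi :
  simple_graph e -> ~ has_cycle e -> bijective L -> edge_ordering e pi ->
  forall x y, e x y = (x != y) && (K_elem L pi (tperm (L x) (L y)) != 0).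
Proof.
move=> [sym irr] nocyc bijL [alle pe] x y.
have injL := bij_inj bijL.
have uq : uniq [seq [set uv.1; uv.2] | uv <- pi] by rewrite (perm_uniq pe) enum_uniq.
have ane : all (fun f => f.1 != f.2) pi.
  apply/allP => f /(allP alle) H; apply/negP => /eqP E.
  by move: H; rewrite E irr.
have fb := forest_of sym irr nocyc alle uq.
have [_ IH2] := inv_main bijL ane fb.
rewrite K_elemE mulf_eq0 negb_or pnatr_eq0 -lt0n fact_gt0 /= IH2 (inj_eq injL).
case: (eqVneq x y) => [<-|nxy] /=; first by rewrite irr.
rewrite sub0r oppr_eq0 pnatr_eq0 -lt0n -has_count.
apply/idP/hasP.
- move=> exy.
  have : [set x; y] \in [seq [set uv.1; uv.2] | uv <- pi].
    by rewrite (perm_mem pe) mem_enum; apply/imsetP; exists (x, y).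
  case/mapP => f fin E; exists f => //.
  case/orP: (set2_eq E) => /andP [/eqP -> /eqP ->]; rewrite /edge_transp ?eqxx //.
  by rewrite tpermC.
- case=> f fin /eqP E.
  have nf : L f.1 != L f.2 by rewrite (inj_eq injL); exact: (allP ane).
  case/orP: (tperm_inj_pair nf E); rewrite !(inj_eq injL) => /andP [/eqP <- /eqP <-].
    exact: (allP alle).
  by rewrite sym; exact: (allP alle).
Qed.

Lemma exists_lab (V : finType) n : #|V| = n -> exists L : V -> 'I_n, bijective L.
Proof.
move=> Hn; exists (fun x => cast_ord Hn (enum_rank x)).
exists (fun i => enum_val (cast_ord (esym Hn) i)) => x /=.
  by rewrite cast_ordK enum_rankK.
by rewrite enum_valK cast_ordKV.
Qed.

Lemma edge_ordering_intro (V : finType) (e : rel V) pi :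
  all (fun uv => e uv.1 uv.2) pi -> uniq [seq [set uv.1; uv.2] | uv <- pi] ->
  (forall x y, e x y -> [set x; y] \in [seq [set uv.1; uv.2] | uv <- pi]) ->
  edge_ordering e pi.
Proof.
move=> al uq cov; split => //.
apply: uniq_perm => //; first exact: enum_uniq.
move=> S; rewrite mem_enum; apply/idP/imsetP.
- case/mapP => uv uvin ->; exists uv => //; exact: (allP al).
- by case=> xy xyin ->; apply: cov.
Qed.

Lemma exists_ord (V : finType) (e : rel V) : exists pi, edge_ordering e pi.
Proof.
suff [pi [al E]] : exists pi, all (fun uv => e uv.1 uv.2) pi /\
    [seq [set uv.1; uv.2] | uv <- pi] = enum (edge_set e).
  by exists pi; split; rewrite ?E.
have : all (fun S => S \in edge_set e) (enum (edge_set e)).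
  by apply/allP => S; rewrite mem_enum.
elim: (enum (edge_set e)) => [|S s IH] /=; first by exists [::].
case/andP => /imsetP [xy xyin ->] /IH [pi [al E]].
by exists (xy :: pi) => /=; rewrite E al andbT; split.
Qed.

Local Close Scope ring_scope.

Theorem mainTheorem8 (n : nat) (V1 V2 : finType) (e1 : rel V1) (e2 : rel V2) :
  #|V1| = n -> #|V2| = n -> is_tree e1 -> is_tree e2 ->
  ((exists x : GA n, in_S_G e1 x /\ in_S_G e2 x) <-> graph_iso e1 e2).
Proof.
move=> H1 H2 [sg1 _ _ nc1] [sg2 _ _ nc2].
split.
- case=> k [[L1 [pi1 [b1 o1 ->]]] [L2 [pi2 [b2 o2 E]]]].
  have [M2 LM2 ML2] := b2.
  exists (M2 \o L1); split.
    by apply: bij_comp => //; exists L2.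
  move=> x y /=.
  rewrite (edge_char sg2 nc2 b2 o2) (edge_char sg1 nc1 b1 o1) !ML2 -E.
  by rewrite (inj_eq (can_inj ML2)) (inj_eq (bij_inj b1)).
- case=> f [bf iso].
  have [L1 b1] := exists_lab H1.
  have [pi1 o1] := exists_ord e1.
  have [g fg gf] := bf.
  exists (K_elem L1 pi1); split; first by exists L1, pi1.
  exists (L1 \o g), [seq (f uv.1, f uv.2) | uv <- pi1]; split.
  + by apply: bij_comp => //; exists f.
  + case: o1 => al pe; apply: edge_ordering_intro.
    * rewrite all_map; apply/allP => uv uvin /=; rewrite iso; exact: (allP al).
    * have -> : [seq [set uv.1; uv.2] | uv <- [seq (f uv.1, f uv.2) | uv <- pi1]] =
                [seq f @: (A : {set V1}) | A <- [seq [set uv.1; uv.2] | uv <- pi1]].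
        by rewrite -!map_comp; apply: eq_map => uv /=; rewrite imsetU1 imset_set1.
      rewrite map_inj_uniq ?(perm_uniq pe) ?enum_uniq //.
      apply: imset_inj; exact: bij_inj.
    * move=> x y exy.
      have : [set g x; g y] \in [seq [set uv.1; uv.2] | uv <- pi1].
        rewrite (perm_mem pe) mem_enum; apply/imsetP; exists (g x, g y) => //.
        by rewrite inE /= -iso !gf.
      case/mapP => uv uvin Euv; apply/mapP; exists (f uv.1, f uv.2); first exact: map_f.
      case/orP: (set2_eq Euv) => /andP [/eqP <- /eqP <-]; rewrite /= !gf //.
      by rewrite setUC.
  + rewrite /K_elem; congr ga_scale.
    by elim: pi1 {o1} => //= uv pi1 ->; rewrite /edge_transp /= !fg.
Qed.
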